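(* For $s \in \{-1,1\}$ and an integer $B \geq 3$, let $I_s(B) = \{t \in \mathbb{Z} : 1 \le t \le B,\ t^2 - 4s > 0\}$, let $N_s(B)$ be the number of distinct square-free parts of the integers $t^2 - 4s$, $t \in I_s(B)$, and let $\Delta_s(B) = \#I_s(B) - N_s(B)$. Then, as $B \to \infty$, $\Delta_{-1}(B) \sim B^{1/3}$ and $\Delta_{1}(B) \sim B^{1/2}$.
   Context: The square-free part of a nonzero integer $n$ is the unique square-free integer $M$ with $n = M r^2$, $r \ge 1$. *)

(* Defs.v *)
From mathcomp Require Import all_boot all_algebra.
Set Implicit Arguments. Unset Strict Implicit. Unset Printing Implicit Defensive.
Import GRing.Theory Num.Theory.

Definition squarefree (M : nat) : bool :=
  (0 < M)%N && [forall d : 'I_M.+1, (1 < d)%N ==> ~~ (d * d %| M)%N].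

(* M is the square-free part of n: M square-free and n = M r^2 for some r
   (r >= 1 automatically when n > 0; any such r satisfies r <= n). *)
Definition is_sqfree_part (M n : nat) : bool :=
  squarefree M && [exists r : 'I_n.+1, n == (M * r ^ 2)%N].

Definition disc (s : int) (t : nat) : int := ((t%:Z) ^+ 2 - 4 * s)%R.

Definition Iset (s : int) (B : nat) : seq nat :=
  [seq t <- iota 1 B | (0 < disc s t)%R].

(* Every square-free part M of a positive n satisfies M <= n,
   so searching M below the sum of all the values (+1) is exhaustive. *)
Definition Nset (s : int) (B : nat) : seq nat :=
  [seq M <- iota 0 (\sum_(t <- Iset s B) `|disc s t|%N).+1
     | has (fun t => is_sqfree_part M `|disc s t|%N) (Iset s B)].

Definition card_I (s : int) (B : nat) : nat := size (Iset s B).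
Definition card_N (s : int) (B : nat) : nat := size (Nset s B).

Definition s_neg : int := (-1)%R.
Definition s_pos : int := 1%R.

(* Main.v *)
From Stdlib Require Import ZArith Lia Psatz Classical.
Local Open Scope Z_scope.

Fixpoint Lq (n a : Z) (k : nat) : Z :=
  match k with
  | O => 2
  | S k' => match k' with
            | O => a
            | S k'' => a * Lq n a k' - n * Lq n a k''
            end
  end.
Fixpoint Fq (n a : Z) (k : nat) : Z :=
  match k with
  | O => 0
  | S k' => match k' with
            | O => 1
            | S k'' => a * Fq n a k' - n * Fq n a k''
            end
  end.

Lemma Lq_SS n a k : Lq n a (S (S k)) = a * Lq n a (S k) - n * Lq n a k.
Proof. reflexivity. Qed.
Lemma Fq_SS n a k : Fq n a (S (S k)) = a * Fq n a (S k) - n * Fq n a k.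
Proof. reflexivity. Qed.

Lemma lucas n a k :
  (2 * Lq n a (S k) = a * Lq n a k + (a*a - 4*n) * Fq n a k /\
   2 * Fq n a (S k) = a * Fq n a k + Lq n a k) /\
  (2 * Lq n a (S (S k)) = a * Lq n a (S k) + (a*a - 4*n) * Fq n a (S k) /\
   2 * Fq n a (S (S k)) = a * Fq n a (S k) + Lq n a (S k)).
Proof.
  induction k as [|k [[IH1 IH2] [IH3 IH4]]].
  - cbn [Lq Fq]. split; split; ring.
  - split; [split; assumption|].
    rewrite (Lq_SS n a (S k)), (Fq_SS n a (S k)).
    split.
    + transitivity (a * (2 * Lq n a (S (S k))) - n * (2 * Lq n a (S k))); [ring|].
      rewrite IH3, IH1, (Fq_SS n a k), (Lq_SS n a k). ring.
    + transitivity (a * (2 * Fq n a (S (S k))) - n * (2 * Fq n a (S k))); [ring|].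
      rewrite IH4, IH2, (Lq_SS n a k), (Fq_SS n a k). ring.
Qed.

Lemma mulstep n a b M k X Y :
  M*b*b = a*a - 4*n ->
  2*X = a * Lq n a k + M*b*(b * Fq n a k) ->
  2*Y = a * (b * Fq n a k) + b * Lq n a k ->
  X = Lq n a (S k) /\ Y = b * Fq n a (S k).
Proof.
  intros HM HX HY. destruct (lucas n a k) as [[E1 E2] _].
  split.
  - assert (2*X = 2 * Lq n a (S k)); [|lia].
    rewrite HX, E1. rewrite <- HM. ring.
  - assert (2*Y = 2 * (b * Fq n a (S k))); [|lia].
    rewrite HY. transitivity (b * (2 * Fq n a (S k))); [|ring].
    rewrite E2. ring.
Qed.

Definition sol (n M x y : Z) : Prop := 1 <= x /\ 1 <= y /\ x*x - M*y*y = 4*n.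

Definition PAR (M : Z) : Prop := forall x1 y1 x2 y2 n1 n2,
  x1*x1 - M*y1*y1 = 4*n1 -> x2*x2 - M*y2*y2 = 4*n2 ->
  exists X Y, 2*X = x1*x2 - M*y1*y2 /\ 2*Y = x1*y2 - x2*y1.

Lemma sqlt u v : 0 <= v -> u*u < v*v -> u < v.
Proof. intros; nia. Qed.

Lemma brahma M a b c d :
  (c*a - M*d*b)*(c*a - M*d*b) - M*((d*a - c*b)*(d*a - c*b)) =
  (c*c - M*d*d)*(a*a - M*b*b).
Proof. ring. Qed.

Lemma plus_step M a b c d X Y : 1 <= M -> sol 1 M a b -> sol 1 M c d -> b < d ->
  2*X = c*a - M*d*b -> 2*Y = d*a - c*b ->
  sol 1 M X Y /\ Y < d /\ 2*c = a*X + M*b*Y /\ 2*d = a*Y + b*X.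
Proof.
  intros HM [Ha1 [Hb1 Hab]] [Hc1 [Hd1 Hcd]] Hbd HX HY.
  assert (A1 : M*d*b < c*a).
  { apply sqlt; [nia|].
    assert (E: (c*a)*(c*a) = (c*c)*(a*a)) by ring.
    rewrite E. replace (c*c) with (M*d*d+4) by lia. replace (a*a) with (M*b*b+4) by lia.
    nia. }
  assert (A2 : c*b < d*a).
  { apply sqlt; [nia|].
    assert (E: (d*a)*(d*a) = (d*d)*(a*a)) by ring.
    assert (E2: (c*b)*(c*b) = (c*c)*(b*b)) by ring.
    rewrite E, E2. replace (c*c) with (M*d*d+4) by lia. replace (a*a) with (M*b*b+4) by lia.
    nia. }
  assert (Ha3 : 3 <= a) by nia.
  assert (A3 : (a-2)*d < c*b).
  { apply sqlt; [nia|].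
    assert (E2: (c*b)*(c*b) = (c*c)*(b*b)) by ring.
    assert (E: ((a-2)*d)*((a-2)*d) = (a*a - 4*a + 4)*(d*d)) by ring.
    rewrite E, E2. replace (c*c) with (M*d*d+4) by lia. replace (a*a) with (M*b*b+4) by lia.
    nia. }
  assert (N : 4*(X*X - M*Y*Y) = 16).
  { transitivity ((2*X)*(2*X) - M*((2*Y)*(2*Y))); [ring|].
    rewrite HX, HY, brahma. rewrite Hab, Hcd. ring. }
  split; [split; [lia|split; [lia|lia]]|].
  split; [lia|].
  split.
  - assert (4*c = 2*(a*X + M*b*Y)); [|lia].
    transitivity (a*(2*X) + M*b*(2*Y)); [|ring]. rewrite HX, HY.
    transitivity (c*(a*a - M*b*b)); [rewrite Hab; ring| ring].
  - assert (4*d = 2*(a*Y + b*X)); [|lia].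
    transitivity (a*(2*Y) + b*(2*X)); [|ring]. rewrite HX, HY.
    transitivity (d*(a*a - M*b*b)); [rewrite Hab; ring| ring].
Qed.

Lemma minus_step1 M a b c d X Y : 1 <= M -> sol (-1) M a b -> sol (-1) M c d -> b < d ->
  2*X = M*d*b - c*a -> 2*Y = c*b - d*a ->
  sol 1 M X Y /\ Y < d /\ 2*c = a*X + M*b*Y /\ 2*d = a*Y + b*X.
Proof.
  intros HM [Ha1 [Hb1 Hab]] [Hc1 [Hd1 Hcd]] Hbd HX HY.
  assert (A1 : c*a < M*d*b).
  { apply sqlt; [nia|].
    assert (E: (c*a)*(c*a) = (c*c)*(a*a)) by ring.
    rewrite E. replace (c*c) with (M*d*d-4) by lia. replace (a*a) with (M*b*b-4) by lia.
    nia. }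
  assert (A2 : d*a < c*b).
  { apply sqlt; [nia|].
    assert (E: (d*a)*(d*a) = (d*d)*(a*a)) by ring.
    assert (E2: (c*b)*(c*b) = (c*c)*(b*b)) by ring.
    rewrite E, E2. replace (c*c) with (M*d*d-4) by lia. replace (a*a) with (M*b*b-4) by lia.
    nia. }
  assert (A3 : c*b < (a+2)*d).
  { apply sqlt; [nia|].
    assert (E2: (c*b)*(c*b) = (c*c)*(b*b)) by ring.
    assert (E: ((a+2)*d)*((a+2)*d) = (a*a + 4*a + 4)*(d*d)) by ring.
    rewrite E, E2. replace (c*c) with (M*d*d-4) by lia. replace (a*a) with (M*b*b-4) by lia.
    nia. }
  assert (N : 4*(X*X - M*Y*Y) = 16).
  { transitivity ((2*X)*(2*X) - M*((2*Y)*(2*Y))); [ring|].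
    rewrite HX, HY.
    transitivity ((c*c - M*d*d)*(a*a - M*b*b)); [ring|]. rewrite Hab, Hcd. ring. }
  split; [split; [lia|split; [lia|lia]]|].
  split; [lia|].
  split.
  - assert (4*c = 2*(a*X + M*b*Y)); [|lia].
    transitivity (a*(2*X) + M*b*(2*Y)); [|ring]. rewrite HX, HY.
    transitivity (c*(M*b*b - a*a)); [|ring]. replace (M*b*b - a*a) with 4 by lia. ring.
  - assert (4*d = 2*(a*Y + b*X)); [|lia].
    transitivity (a*(2*Y) + b*(2*X)); [|ring]. rewrite HX, HY.
    transitivity (d*(M*b*b - a*a)); [|ring]. replace (M*b*b - a*a) with 4 by lia. ring.
Qed.

Lemma minus_step2a M a b X Y Z W : 2 <= M -> sol (-1) M a b -> sol 1 M X Y -> Y < b ->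
  2*Z = a*X - M*b*Y -> 2*W = b*X - a*Y -> sol (-1) M Z W /\ W < b.
Proof.
  intros HM [Ha1 [Hb1 Hab]] [HX1 [HY1 HXY]] HYb HZ HW.
  assert (A1 : M*b*Y < a*X).
  { apply sqlt; [nia|].
    assert (E: (a*X)*(a*X) = (a*a)*(X*X)) by ring.
    rewrite E. replace (X*X) with (M*Y*Y+4) by lia. replace (a*a) with (M*b*b-4) by lia.
    nia. }
  assert (A2 : a*Y < b*X).
  { apply sqlt; [nia|].
    assert (E: (a*Y)*(a*Y) = (a*a)*(Y*Y)) by ring.
    assert (E2: (b*X)*(b*X) = (X*X)*(b*b)) by ring.
    rewrite E, E2. replace (X*X) with (M*Y*Y+4) by lia. replace (a*a) with (M*b*b-4) by lia.
    nia. }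
  assert (A3 : b*X < 2*b + a*Y).
  { apply sqlt; [nia|].
    assert (E2: (b*X)*(b*X) = (X*X)*(b*b)) by ring.
    assert (E: (2*b + a*Y)*(2*b + a*Y) = 4*b*b + 4*a*b*Y + (a*a)*(Y*Y)) by ring.
    rewrite E, E2. replace (X*X) with (M*Y*Y+4) by lia. replace (a*a) with (M*b*b-4) by lia.
    nia. }
  assert (N : 4*(Z*Z - M*W*W) = -16).
  { transitivity ((2*Z)*(2*Z) - M*((2*W)*(2*W))); [ring|].
    rewrite HZ, HW.
    transitivity ((a*a - M*b*b)*(X*X - M*Y*Y)); [ring|]. rewrite Hab, HXY. ring. }
  split; [split; [lia|split; [lia|lia]]|lia].
Qed.

Lemma minus_step2b M a b X Y c d : 1 <= M -> sol (-1) M a b -> sol 1 M X Y -> b <= Y ->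
  2*c = M*Y*b - X*a -> 2*d = X*b - Y*a ->
  sol (-1) M c d /\ d <= Y /\ 2*X = a*c + M*b*d /\ 2*Y = a*d + b*c.
Proof.
  intros HM [Ha1 [Hb1 Hab]] [HX1 [HY1 HXY]] HYb HZ HW.
  assert (A1 : X*a < M*Y*b).
  { apply sqlt; [nia|].
    assert (E: (X*a)*(X*a) = (a*a)*(X*X)) by ring.
    rewrite E. replace (X*X) with (M*Y*Y+4) by lia. replace (a*a) with (M*b*b-4) by lia.
    nia. }
  assert (A2 : Y*a < X*b).
  { apply sqlt; [nia|].
    assert (E: (Y*a)*(Y*a) = (a*a)*(Y*Y)) by ring.
    assert (E2: (X*b)*(X*b) = (X*X)*(b*b)) by ring.
    rewrite E, E2. replace (X*X) with (M*Y*Y+4) by lia. replace (a*a) with (M*b*b-4) by lia.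
    nia. }
  assert (A3 : X*b <= (a+2)*Y).
  { assert (X*b < (a+2)*Y + 1); [|lia]. apply sqlt; [nia|].
    assert (E2: (X*b)*(X*b) = (X*X)*(b*b)) by ring.
    assert (E: ((a+2)*Y+1)*((a+2)*Y+1) = (a*a+4*a+4)*(Y*Y) + 2*(a+2)*Y + 1) by ring.
    rewrite E, E2. replace (X*X) with (M*Y*Y+4) by lia. replace (a*a) with (M*b*b-4) by lia.
    nia. }
  assert (N : 4*(c*c - M*d*d) = -16).
  { transitivity ((2*c)*(2*c) - M*((2*d)*(2*d))); [ring|].
    rewrite HZ, HW.
    transitivity ((a*a - M*b*b)*(X*X - M*Y*Y)); [ring|]. rewrite Hab, HXY. ring. }
  split; [split; [lia|split; [lia|lia]]|].
  split; [lia|].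
  split.
  - assert (4*X = 2*(a*c + M*b*d)); [|lia].
    transitivity (a*(2*c) + M*b*(2*d)); [|ring]. rewrite HZ, HW.
    transitivity (X*(M*b*b - a*a)); [|ring]. replace (M*b*b - a*a) with 4 by lia. ring.
  - assert (4*Y = 2*(a*d + b*c)); [|lia].
    transitivity (a*(2*d) + b*(2*c)); [|ring]. rewrite HZ, HW.
    transitivity (Y*(M*b*b - a*a)); [|ring]. replace (M*b*b - a*a) with 4 by lia. ring.
Qed.

Lemma nat_min (P : nat -> Prop) n : P n -> exists m, P m /\ forall k, P k -> (m <= k)%nat.
Proof.
  revert P. induction n as [n IH] using (well_founded_induction lt_wf).
  intros P Hn.
  destruct (classic (exists k, (k < n)%nat /\ P k)) as [[k [Hk HPk]]|Hno].
  - exact (IH k Hk P HPk).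
  - exists n. split; [exact Hn|]. intros k Hk.
    destruct (Nat.lt_ge_cases k n) as [H|H]; [exfalso; apply Hno; eauto|exact H].
Qed.

Lemma pell_plus M a b : 1 <= M -> PAR M -> sol 1 M a b ->
  (forall x y, sol 1 M x y -> b <= y) ->
  forall c d, sol 1 M c d -> exists k, c = Lq 1 a (S k) /\ d = b * Fq 1 a (S k).
Proof.
  intros HM HP Hab Hmin.
  assert (G : forall N c d, (Z.to_nat d < N)%nat -> sol 1 M c d ->
            exists k, c = Lq 1 a (S k) /\ d = b * Fq 1 a (S k)).
  { induction N as [|N IH]; intros c d HN Hcd; [lia|].
    pose proof (Hmin c d Hcd) as Hbd.
    destruct Hab as [Ha1 [Hb1 Hab']]. destruct Hcd as [Hc1 [Hd1 Hcd']].
    destruct (Z.eq_dec d b) as [E|E].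
    - subst d. exists 0%nat. cbn [Lq Fq]. split; [nia|ring].
    - destruct (HP c d a b 1 1 Hcd' Hab') as [X0 [Y0 [HX0 HY0]]].
      destruct (plus_step M a b c d X0 (-Y0) HM (conj Ha1 (conj Hb1 Hab'))
                  (conj Hc1 (conj Hd1 Hcd')) ltac:(lia) ltac:(lia) ltac:(lia))
        as [HXY [HYd [Rc Rd]]].
      destruct (IH X0 (-Y0) ltac:(lia) HXY) as [k [Ek Fk]].
      rewrite Ek, Fk in Rc, Rd.
      destruct (mulstep 1 a b M (S k) c d ltac:(lia) Rc Rd) as [E1 E2].
      exists (S k). split; assumption. }
  intros c d Hcd. exact (G (S (Z.to_nat d)) c d ltac:(lia) Hcd).
Qed.

Lemma pell_minus M a b : 2 <= M -> PAR M -> sol (-1) M a b ->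
  (forall x y, sol (-1) M x y -> b <= y) ->
  forall c d, sol (-1) M c d -> exists j, c = Lq (-1) a (S (2*j)) /\ d = b * Fq (-1) a (S (2*j)).
Proof.
  intros HM HP Hab Hmin.
  assert (G : forall N c d, (Z.to_nat d < N)%nat -> sol (-1) M c d ->
            exists j, c = Lq (-1) a (S (2*j)) /\ d = b * Fq (-1) a (S (2*j))).
  { induction N as [|N IH]; intros c d HN Hcd; [lia|].
    pose proof (Hmin c d Hcd) as Hbd.
    pose proof Hab as Hab0. pose proof Hcd as Hcd0.
    destruct Hab as [Ha1 [Hb1 Hab']]. destruct Hcd as [Hc1 [Hd1 Hcd']].
    destruct (Z.eq_dec d b) as [E|E].
    - subst d. exists 0%nat. change (S (2*0)) with 1%nat. cbn [Lq Fq]. split; [nia|ring].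
    - destruct (HP c d a b (-1) (-1) Hcd' Hab') as [X0 [Y0 [HX0 HY0]]].
      destruct (minus_step1 M a b c d (-X0) Y0 ltac:(lia) Hab0 Hcd0 ltac:(lia) ltac:(lia) ltac:(lia))
        as [HXY [HYd [Rc Rd]]].
      pose proof HXY as [HX1 [HY1 HXY']].
      destruct (Z.lt_ge_cases Y0 b) as [Hlt|Hge].
      + destruct (HP a b (-X0) Y0 (-1) 1 Hab' HXY') as [Z0 [W0 [HZ0 HW0]]].
        destruct (minus_step2a M a b (-X0) Y0 Z0 (-W0) HM Hab0 HXY Hlt ltac:(lia) ltac:(lia))
          as [HZW HWb].
        pose proof (Hmin _ _ HZW). lia.
      + destruct (HP (-X0) Y0 a b 1 (-1) HXY' Hab') as [C0 [D0 [HC0 HD0]]].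
        destruct (minus_step2b M a b (-X0) Y0 (-C0) D0 ltac:(lia) Hab0 HXY ltac:(lia) ltac:(lia) ltac:(lia))
          as [HCD [HDY [RX RY]]].
        destruct (IH (-C0) D0 ltac:(lia) HCD) as [j [Ej Fj]].
        rewrite Ej, Fj in RX, RY.
        destruct (mulstep (-1) a b M (S (2*j)) (-X0) Y0 ltac:(lia) RX RY) as [E1 E2].
        rewrite E1, E2 in Rc, Rd.
        destruct (mulstep (-1) a b M (S (S (2*j))) c d ltac:(lia) Rc Rd) as [E3 E4].
        exists (S j). replace (2 * S j)%nat with (S (S (2*j))) by lia.
        split; assumption. }
  intros c d Hcd. exact (G (S (Z.to_nat d)) c d ltac:(lia) Hcd).
Qed.

Lemma even_half z : Z.even z = true -> exists X, 2*X = z.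
Proof. intros H. apply Z.even_spec in H. destruct H as [m Hm]. exists m. lia. Qed.

Lemma par_parity M x y n : Z.even M = false -> x*x - M*y*y = 4*n -> Z.even x = Z.even y.
Proof.
  intros HM E. apply (f_equal Z.even) in E.
  rewrite Z.even_sub, !Z.even_mul, HM in E. simpl in E.
  destruct (Z.even x), (Z.even y); simpl in *; congruence.
Qed.

Lemma par_even M x y n : (forall k, M <> 4*k) -> Z.even M = true ->
  x*x - M*y*y = 4*n -> Z.even x = true /\ Z.even y = true.
Proof.
  intros H4 HM E.
  apply Z.even_spec in HM. destruct HM as [m Hm].
  assert (Hx : Z.even x = true).
  { pose proof (f_equal Z.even E) as E'.
    rewrite Z.even_sub, !Z.even_mul in E'. subst M. rewrite Z.even_mul in E'. simpl in E'.
    destruct (Z.even x); simpl in *; congruence. }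
  split; [exact Hx|].
  apply Z.even_spec in Hx. destruct Hx as [p Hp]. subst x M.
  assert (E2 : m*y*y = 2*(p*p - n)) by nia.
  apply (f_equal Z.even) in E2. rewrite !Z.even_mul in E2. simpl in E2.
  destruct (Z.even m) eqn:Em.
  - exfalso. apply Z.even_spec in Em. destruct Em as [q Hq]. apply (H4 q). lia.
  - destruct (Z.even y); simpl in *; congruence.
Qed.

Lemma par_of M : (forall k, M <> 4*k) -> PAR M.
Proof.
  intros H4 x1 y1 x2 y2 n1 n2 E1 E2.
  destruct (Z.even M) eqn:HM.
  - destruct (par_even M x1 y1 n1 H4 HM E1) as [A1 B1].
    destruct (par_even M x2 y2 n2 H4 HM E2) as [A2 B2].
    destruct (even_half (x1*x2 - M*y1*y2)) as [X HX].
    { rewrite Z.even_sub, !Z.even_mul, A1, A2, B1, B2, HM. reflexivity. }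
    destruct (even_half (x1*y2 - x2*y1)) as [Y HY].
    { rewrite Z.even_sub, !Z.even_mul, A1, A2, B1, B2. reflexivity. }
    eauto.
  - pose proof (par_parity M x1 y1 n1 HM E1) as P1.
    pose proof (par_parity M x2 y2 n2 HM E2) as P2.
    destruct (even_half (x1*x2 - M*y1*y2)) as [X HX].
    { rewrite Z.even_sub, !Z.even_mul, P1, P2, HM.
      destruct (Z.even y1), (Z.even y2); reflexivity. }
    destruct (even_half (x1*y2 - x2*y1)) as [Y HY].
    { rewrite Z.even_sub, !Z.even_mul, P1, P2.
      destruct (Z.even y1), (Z.even y2); reflexivity. }
    eauto.
Qed.

Section GrowMinus.
Variable a : Z.
Hypothesis Ha : 1 <= a.
Notation L := (Lq (-1) a).

Lemma Lm_nonneg k : 0 <= L k /\ 0 <= L (S k).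
Proof.
  induction k as [|k [IH1 IH2]]; [cbn [Lq]; lia|].
  split; [exact IH2|]. rewrite Lq_SS. nia.
Qed.

Lemma Lm_step k : a * L (S k) <= L (S (S k)).
Proof. rewrite Lq_SS. pose proof (Lm_nonneg k). nia. Qed.

Lemma Lm_mono k m : L (S k) <= L (S (k + m)).
Proof.
  induction m as [|m IH]; [rewrite Nat.add_0_r; lia|].
  rewrite Nat.add_succ_r. pose proof (Lm_step (k+m)). pose proof (Lm_nonneg (S (k+m))). nia.
Qed.

Lemma Lm_pow k : a ^ Z.of_nat (S k) <= L (S k).
Proof.
  induction k as [|k IH]; [cbn [Lq]; simpl; lia|].
  pose proof (Lm_step k).
  rewrite Nat2Z.inj_succ, Z.pow_succ_r by lia. nia.
Qed.

Lemma Lm_two j : 2 ^ Z.of_nat j <= L (S (2*j)).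
Proof.
  induction j as [|j IH]; [cbn [Lq]; simpl; lia|].
  replace (S (2 * S j)) with (S (S (S (2*j)))) by lia.
  rewrite Lq_SS. pose proof (Lm_step (2*j)). pose proof (Lm_nonneg (S (2*j))).
  rewrite Nat2Z.inj_succ, Z.pow_succ_r by lia. nia.
Qed.

Lemma Lm_3 : L 3 = a*a*a + 3*a.
Proof. cbn [Lq]. ring. Qed.
End GrowMinus.

Section GrowPlus.
Variable a : Z.
Hypothesis Ha : 3 <= a.
Notation L := (Lq 1 a).

Lemma Lp_step k : 1 <= L (S k) /\ (a-1) * L (S k) <= L (S (S k)).
Proof.
  induction k as [|k [IH1 IH2]]; [cbn [Lq]; nia|].
  split; [nia|]. rewrite (Lq_SS 1 a (S k)). nia.
Qed.

Lemma Lp_mono k m : L (S k) <= L (S (k + m)).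
Proof.
  induction m as [|m IH]; [rewrite Nat.add_0_r; lia|].
  rewrite Nat.add_succ_r. pose proof (Lp_step (k+m)). nia.
Qed.

Lemma Lp_pow k : (a-1) ^ Z.of_nat (S k) <= L (S k).
Proof.
  induction k as [|k IH]; [cbn [Lq]; simpl; lia|].
  pose proof (Lp_step k).
  rewrite Nat2Z.inj_succ, Z.pow_succ_r by lia. nia.
Qed.

Lemma Lp_two k : 2 ^ Z.of_nat (S k) <= L (S k).
Proof.
  induction k as [|k IH]; [cbn [Lq]; simpl; lia|].
  pose proof (Lp_step k).
  rewrite Nat2Z.inj_succ, Z.pow_succ_r by lia. nia.
Qed.

Lemma Lp_2 : L 2 = a*a - 2.
Proof. cbn [Lq]. ring. Qed.
End GrowPlus.

Lemma min_sol n M t r : sol n M t r ->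
  exists a b, sol n M a b /\ forall x y, sol n M x y -> b <= y.
Proof.
  intros H.
  destruct (nat_min (fun k => exists x y, sol n M x y /\ Z.to_nat y = k) (Z.to_nat r))
    as [m [[a [b [Hab Hb]]] Hm]]; [eauto|].
  exists a, b. split; [exact Hab|]. intros x y Hxy.
  pose proof (Hm (Z.to_nat y) ltac:(eauto)). destruct Hab as [_ [? _]]. destruct Hxy as [_ [? _]]. lia.
Qed.

Lemma class_minus M t r u r' : 2 <= M -> PAR M -> sol (-1) M t r -> sol (-1) M u r' -> t < u ->
  exists a j, 1 <= a /\ (1 <= j)%nat /\ u = Lq (-1) a (S (2*j)).
Proof.
  intros HM HP Ht Hu Htu.
  destruct (min_sol _ _ _ _ Ht) as [a [b [Hab Hmin]]].
  destruct (pell_minus M a b HM HP Hab Hmin t r Ht) as [j1 [Et _]].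
  destruct (pell_minus M a b HM HP Hab Hmin u r' Hu) as [j2 [Eu _]].
  destruct Hab as [Ha1 _].
  exists a, j2. split; [exact Ha1|]. split; [|exact Eu].
  destruct j2 as [|j2]; [|lia]. exfalso.
  pose proof (Lm_mono a Ha1 0 (2*j1)) as H. rewrite Nat.add_0_l, <- Et in H.
  change (S (2*0)) with 1%nat in Eu. cbn [Lq] in Eu, H. lia.
Qed.

Lemma class_plus M t r u r' : 1 <= M -> PAR M -> sol 1 M t r -> sol 1 M u r' -> t < u ->
  exists a k, 3 <= a /\ (1 <= k)%nat /\ u = Lq 1 a (S k).
Proof.
  intros HM HP Ht Hu Htu.
  destruct (min_sol _ _ _ _ Ht) as [a [b [Hab Hmin]]].
  destruct (pell_plus M a b HM HP Hab Hmin t r Ht) as [k1 [Et _]].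
  destruct (pell_plus M a b HM HP Hab Hmin u r' Hu) as [k2 [Eu _]].
  destruct Hab as [Ha1 [Hb1 Hab]].
  assert (Ha3 : 3 <= a) by nia.
  exists a, k2. split; [exact Ha3|]. split; [|exact Eu].
  destruct k2 as [|k2]; [|lia]. exfalso.
  pose proof (Lp_mono a Ha3 0 k1) as H. rewrite Nat.add_0_l, <- Et in H.
  cbn [Lq] in Eu, H. lia.
Qed.

Lemma Lm_mono' a k m : 1 <= a -> (k <= m)%nat -> Lq (-1) a (S k) <= Lq (-1) a (S m).
Proof. intros Ha H. replace m with (k + (m - k))%nat by lia. apply Lm_mono; exact Ha. Qed.

Lemma Lp_mono' a k m : 3 <= a -> (k <= m)%nat -> Lq 1 a (S k) <= Lq 1 a (S m).
Proof. intros Ha H. replace m with (k + (m - k))%nat by lia. apply Lp_mono; exact Ha. Qed.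

Close Scope Z_scope.

Require Import Defs.
From mathcomp Require Import all_boot all_algebra.
From Stdlib Require Import Reals.
From Coquelicot Require Import Coquelicot.
From mathcomp Require Import zify.
Set Implicit Arguments. Unset Strict Implicit. Unset Printing Implicit Defensive.
Import mathcomp.order.order.Order.TTheory GRing.Theory Num.Theory.
Open Scope nat_scope.

Lemma sqfP M : squarefree M -> forall d, (1 < d)%nat -> ~~ (d * d %| M)%nat.
Proof.
  move=> /andP [HM /forallP H] d Hd.
  case: (leqP d M) => HdM.
  - have := H (Ordinal (n:=M.+1) (m:=d) ltac:(lia)). by rewrite /= Hd.
  - apply/negP => /dvdn_leq => /(_ HM). nia.
Qed.

Lemma sqfI M : (0 < M)%nat -> (forall d, (1 < d)%nat -> ~~ (d * d %| M)%nat) -> squarefree M.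
Proof.
  move=> HM H. rewrite /squarefree HM /=. apply/forallP => d. apply/implyP => Hd. exact: H.
Qed.

Lemma sqf_exists n : (0 < n)%nat -> exists M r, squarefree M /\ n = (M * expn r 2)%nat.
Proof.
  elim/ltn_ind: n => n IH Hn.
  case: (classic (exists d, (1 < d)%nat /\ (d * d %| n)%nat)) => [[d [Hd Hdn]]|Hno].
  - move: Hdn => /dvdnP [n' En].
    have Hn' : (0 < n')%nat by move: Hn; rewrite En; case: n' {En} => //.
    have Hlt : (n' < n)%nat by rewrite En -{1}[n']muln1 ltn_pmul2l //; nia.
    have [M [r [HM Er]]] := IH n' Hlt Hn'.
    exists M, (r * d)%nat. split => //. rewrite En Er -!mulnn; lia.
  - exists n, 1%nat. split; last by rewrite exp1n muln1.
    apply: sqfI => // d Hd. apply/negP => Hdn. apply: Hno. by exists d.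
Qed.

Lemma sqf_unique M M' r r' : squarefree M -> squarefree M' -> (0 < r)%nat -> (0 < r')%nat ->
  (M * expn r 2 = M' * expn r' 2)%nat -> M = M'.
Proof.
  move=> HM HM' Hr Hr' E.
  set g := gcdn r r'.
  have Hg : (0 < g)%nat by rewrite gcdn_gt0 Hr.
  have [a Ea] : exists a, r = (a * g)%nat by exists (r %/ g)%nat; rewrite divnK // dvdn_gcdl.
  have [b Eb] : exists b, r' = (b * g)%nat by exists (r' %/ g)%nat; rewrite divnK // dvdn_gcdr.
  have Cab : coprime a b.
  { rewrite /coprime. have := muln_gcdl a b g. rewrite -Ea -Eb -/g => H.
    rewrite -(eqn_pmul2r Hg) mul1n. by apply/eqP. }
  have E2 : (M * (a * a) = M' * (b * b))%nat.
  { have Hgg : (0 < g*g)%nat by rewrite muln_gt0 Hg.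
    apply/eqP. rewrite -(eqn_pmul2r Hgg). apply/eqP.
    move: E. rewrite Ea Eb -!mulnn. lia. }
  have Ha : (0 < a)%nat by move: Hr; rewrite Ea; case: a {Ea Cab E2}.
  have Hb : (0 < b)%nat by move: Hr'; rewrite Eb; case: b {Eb Cab E2}.
  have Ca2 : coprime (a * a) (b * b) by rewrite coprimeMl !coprimeMr Cab.
  have Da : (a * a %| M')%nat.
  { rewrite -(Gauss_dvdl _ Ca2) -E2. exact: dvdn_mull. }
  have Db : (b * b %| M)%nat.
  { rewrite coprime_sym in Ca2. rewrite -(Gauss_dvdl _ Ca2) E2. exact: dvdn_mull. }
  have a1 : a = 1%nat.
  { case: (ltngtP a 1) => // Ha1; first lia. by have := sqfP HM' Ha1; rewrite Da. }
  have b1 : b = 1%nat.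
  { case: (ltngtP b 1) => // Hb1; first lia. by have := sqfP HM Hb1; rewrite Db. }
  move: E2; rewrite a1 b1; lia.
Qed.

Lemma isp_iff M n : (0 < n)%nat ->
  is_sqfree_part M n <-> squarefree M /\ exists r, n = (M * expn r 2)%nat.
Proof.
  move=> Hn. split.
  - move=> /andP [HM /existsP [r /eqP Er]]. split => //. by exists r.
  - move=> [HM [r Er]]. rewrite /is_sqfree_part HM /=.
    have HM0 : (0 < M)%nat by move: HM => /andP [].
    have Hr : (r < n.+1)%nat.
    { move: Er Hn. rewrite -mulnn. case: r => [|r]; first lia. nia. }
    apply/existsP. exists (Ordinal Hr). by rewrite /= Er.
Qed.

Lemma isp_le M n : (0 < n)%nat -> is_sqfree_part M n -> (M <= n)%nat.
Proof.
  move=> Hn /(isp_iff _ Hn) [_ [r Er]]. move: Er Hn. rewrite -mulnn.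
  case: r => [|r] Er Hn; first lia. nia.
Qed.

Definition sp (n : nat) : nat := seq.head 0%nat [seq M <- seq.iota 0 n.+1 | is_sqfree_part M n].

Lemma sp_spec n : (0 < n)%nat -> is_sqfree_part (sp n) n.
Proof.
  move=> Hn. have [M [r [HM Er]]] := sqf_exists Hn.
  have HMn : is_sqfree_part M n by apply/(isp_iff _ Hn); split => //; exists r.
  have Hin : M \in [seq M <- seq.iota 0 n.+1 | is_sqfree_part M n].
  { rewrite mem_filter HMn mem_iota /=. have := isp_le Hn HMn. lia. }
  rewrite /sp. move: Hin. case: [seq M <- seq.iota 0 n.+1 | is_sqfree_part M n] (filter_all (fun M => is_sqfree_part M n) (seq.iota 0 n.+1)) => [|x s] //= /andP [] //.
Qed.

Lemma sp_uniq n M : (0 < n)%nat -> is_sqfree_part M n -> M = sp n.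
Proof.
  move=> Hn HM. have HS := sp_spec Hn.
  move: HM HS => /(isp_iff _ Hn) [HM [r Er]] /(isp_iff _ Hn) [HS [r' Er']].
  apply: (sqf_unique HM HS _ _ (etrans (esym Er) Er')).
  - move: Er Hn. rewrite -mulnn. case: r => //. lia.
  - move: Er' Hn. rewrite -mulnn. case: r' => //. lia.
Qed.

Lemma sp_mul n h : (0 < n)%nat -> (0 < h)%nat -> sp (n * (h * h)) = sp n.
Proof.
  move=> Hn Hh. have HS := sp_spec Hn.
  move: (HS) => /(isp_iff _ Hn) [HM [r Er]].
  have Hnh : (0 < n * (h * h))%nat by rewrite !muln_gt0 Hn Hh.
  symmetry. apply: sp_uniq => //. apply/(isp_iff _ Hnh). split => //.
  exists (r * h)%nat. rewrite {1}Er -!mulnn. nia.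
Qed.

Lemma sz_rcons (l : seq nat) y : size (undup (rcons l y)) = size (undup l) + (y \notin l).
Proof.
  have -> : size (undup (rcons l y)) = size (undup (y :: l)).
  { apply: perm_size. apply: uniq_perm; try exact: undup_uniq.
    move=> z. by rewrite !mem_undup mem_rcons. }
  rewrite /=. case: (y \in l) => /=; lia.
Qed.

Lemma iota_rcons1 B : seq.iota 1 B.+1 = rcons (seq.iota 1 B) B.+1.
Proof. have := iotaD 1 B 1. rewrite addn1 => ->. by rewrite cats1 add1n. Qed.

Lemma classes_count (P : pred nat) (f : nat -> nat) B :
  let s := [seq t <- seq.iota 1 B | P t] in
  size (undup (map f s)) + count (fun u => has (fun t => (t < u) && (f t == f u)) s) s = size s.
Proof.
  elim: B => [|B IH]; first by []. cbv zeta in IH |- *.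
  rewrite iota_rcons1 filter_rcons.
  case HP: (P B.+1); last exact: IH.
  set s := [seq t <- seq.iota 1 B | P t] in IH *.
  have Hs : forall t, t \in s -> t <= B.
  { move=> t. rewrite mem_filter mem_iota => /andP [_ /andP [_ H]]. lia. }
  rewrite map_rcons sz_rcons size_rcons -cats1 count_cat /=.
  have -> : count (fun u => has (fun t => (t < u) && (f t == f u)) (s ++ [:: B.+1])) s =
            count (fun u => has (fun t => (t < u) && (f t == f u)) s) s.
  { apply: eq_in_count => u Hu. rewrite has_cat /=.
    have := Hs u Hu. case: (ltnP B.+1 u) => //; lia. }
  have -> : has (fun t => (t < B.+1) && (f t == f B.+1)) (s ++ [:: B.+1]) = (f B.+1 \in map f s).
  { rewrite has_cat /= ltnn /= orbF. apply/hasP/mapP.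
    - move=> [t Ht /andP [_ /eqP E]]. by exists t.
    - move=> [t Ht E]. exists t => //. rewrite E eqxx andbT. have := Hs t Ht. lia. }
  move: IH. case: (f B.+1 \in map f s) => /=; lia.
Qed.

Lemma sum_ge (s : seq nat) (F : nat -> nat) x : x \in s -> F x <= \sum_(i <- s) F i.
Proof.
  elim: s => [|y s IH] //=. rewrite in_cons big_cons => /orP [/eqP ->|H].
  - exact: leq_addr.
  - have := IH H. lia.
Qed.

Definition fcl (s : int) (t : nat) : nat := sp `|Defs.disc s t|%N.

Lemma disc_pos s B t : t \in Iset s B -> 0 < `|Defs.disc s t|%N.
Proof.
  rewrite /Iset mem_filter => /andP [H _]. rewrite absz_gt0. by rewrite gt_eqF.
Qed.

Lemma cardN_eq s B : card_N s B = size (undup (map (fcl s) (Iset s B))).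
Proof.
  rewrite /card_N. apply: perm_size. apply: uniq_perm.
  - apply: filter_uniq. exact: iota_uniq.
  - exact: undup_uniq.
  - move=> M. rewrite mem_undup mem_filter. apply/idP/idP.
    + move=> /andP [/hasP [t Ht HM] _]. apply/mapP. exists t => //.
      rewrite /fcl. exact: (sp_uniq (disc_pos Ht) HM).
    + move=> /mapP [t Ht ->]. apply/andP. split.
      * apply/hasP. exists t => //. rewrite /fcl. exact: (sp_spec (disc_pos Ht)).
      * rewrite mem_iota /=. have H1 := isp_le (disc_pos Ht) (sp_spec (disc_pos Ht)).
        have H2 := sum_ge (fun t => `|Defs.disc s t|%N) Ht. rewrite /fcl. lia.
Qed.

Lemma delta_count s B :
  card_N s B + count (fun u => has (fun t => (t < u) && (fcl s t == fcl s u)) (Iset s B)) (Iset s B)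
  = card_I s B.
Proof. rewrite cardN_eq /card_I /Iset. exact: classes_count. Qed.

Lemma disc_neg t : Defs.disc s_neg t = Posz (t * t + 4).
Proof. rewrite /Defs.disc /s_neg expr2. lia. Qed.

Lemma disc_pos_eq t : (3 <= t) -> Defs.disc s_pos t = Posz (t * t - 4).
Proof. move=> Ht. rewrite /Defs.disc /s_pos expr2. lia. Qed.

Open Scope ring_scope.
Lemma disc_pos_iff t : (0 < Defs.disc s_pos t) = (3 <= t)%nat.
Proof. rewrite /Defs.disc /s_pos expr2. apply/idP/idP; nia. Qed.

Lemma disc_neg_pos t : (0 < Defs.disc s_neg t).
Proof. rewrite disc_neg. lia. Qed.
Close Scope ring_scope.
Open Scope nat_scope.

Lemma sqf_par M : squarefree M -> PAR (Z.of_nat M).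
Proof.
  move=> HM. apply: par_of => k Hk.
  have := sqfP HM (d:=2) isT. apply/negP/negPn. apply/dvdnP. exists (Z.to_nat k). lia.
Qed.

Lemma sqf_pos M : squarefree M -> 0 < M.
Proof. by move=> /andP []. Qed.

Lemma Iset_range s B t : t \in Iset s B -> 1 <= t <= B.
Proof. rewrite /Iset mem_filter mem_iota => /andP [_ H]. lia. Qed.

Lemma Vneg_struct B u :
  has (fun t => (t < u) && (fcl s_neg t == fcl s_neg u)) (Iset s_neg B) ->
  exists a j, 1 <= a /\ 1 <= j /\ Z.of_nat u = Lq (-1) (Z.of_nat a) (S (2*j)).
Proof.
  move=> /hasP [t Ht /andP [Htu /eqP Ef]].
  have [Ht1 _] := andP (Iset_range Ht).
  have P1 : 0 < t * t + 4 by lia.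
  have P2 : 0 < u * u + 4 by lia.
  have H1 := sp_spec P1. have H2 := sp_spec P2.
  rewrite /fcl !disc_neg /= in Ef.
  rewrite Ef in H1.
  move: H1 => /(isp_iff _ P1) [HM [r Er]].
  move: H2 => /(isp_iff _ P2) [_ [r' Er']].
  set M := sp (u * u + 4) in HM Er Er'.
  rewrite -mulnn in Er. rewrite -mulnn in Er'.
  have HM1 := sqf_pos HM.
  have Hr : 0 < r by move: Er; case: r => [|r] //; lia.
  have Hr' : 0 < r' by move: Er'; case: r' => [|r'] //; lia.
  have HM2 : 1 < M.
  { case: (ltngtP M 1) => // HM3; first lia. exfalso. move: Er. rewrite HM3 mul1n.
    move=> Er. have Htr : t < r.
    { case: (ltnP t r) => // Hrt. have : r * r <= t * t by apply: leq_mul. lia. }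
    have : t.+1 * t.+1 <= r * r by apply: leq_mul.
    move=> H. have Ht1b : t = 1 by lia. subst t.
    case: (leqP r 2) => Hr2. - have : r * r <= 2 * 2 by apply: leq_mul. lia.
    - have : 3 * 3 <= r * r by apply: leq_mul. lia. }
  have S1 : sol (-1) (Z.of_nat M) (Z.of_nat t) (Z.of_nat r).
  { rewrite /sol. lia. }
  have S2 : sol (-1) (Z.of_nat M) (Z.of_nat u) (Z.of_nat r').
  { rewrite /sol. lia. }
  have HM2' : (2 <= Z.of_nat M)%Z by lia.
  have Htu' : (Z.of_nat t < Z.of_nat u)%Z by lia.
  have [a [j [Ha [Hj E]]]] := class_minus _ _ _ _ _ HM2' (sqf_par HM) S1 S2 Htu'.
  exists (Z.to_nat a), j. split; first lia. split; first lia.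
  rewrite Z2Nat.id //; lia.
Qed.

Lemma Vpos_struct B u :
  has (fun t => (t < u) && (fcl s_pos t == fcl s_pos u)) (Iset s_pos B) ->
  u \in Iset s_pos B ->
  exists a k, 3 <= a /\ 1 <= k /\ Z.of_nat u = Lq 1 (Z.of_nat a) (S k).
Proof.
  move=> /hasP [t Ht /andP [Htu /eqP Ef]] Hu.
  have Ht3 : 3 <= t by move: Ht; rewrite /Iset mem_filter disc_pos_iff => /andP [].
  have Hu3 : 3 <= u by move: Hu; rewrite /Iset mem_filter disc_pos_iff => /andP [].
  have P1 : 0 < t * t - 4 by nia.
  have P2 : 0 < u * u - 4 by nia.
  have H1 := sp_spec P1. have H2 := sp_spec P2.
  rewrite /fcl !disc_pos_eq //= in Ef.
  rewrite Ef in H1.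
  move: H1 => /(isp_iff _ P1) [HM [r Er]].
  move: H2 => /(isp_iff _ P2) [_ [r' Er']].
  set M := sp (u * u - 4) in HM Er Er'.
  rewrite -mulnn in Er. rewrite -mulnn in Er'.
  have HM1 := sqf_pos HM.
  have Hr : 0 < r by move: Er P1; case: r => [|r] //; lia.
  have Hr' : 0 < r' by move: Er' P2; case: r' => [|r'] //; lia.
  have S1 : sol 1 (Z.of_nat M) (Z.of_nat t) (Z.of_nat r).
  { rewrite /sol. nia. }
  have S2 : sol 1 (Z.of_nat M) (Z.of_nat u) (Z.of_nat r').
  { rewrite /sol. nia. }
  have HM2' : (1 <= Z.of_nat M)%Z by lia.
  have Htu' : (Z.of_nat t < Z.of_nat u)%Z by lia.
  have [a [k [Ha [Hk E]]]] := class_plus _ _ _ _ _ HM2' (sqf_par HM) S1 S2 Htu'.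
  exists (Z.to_nat a), k. split; first lia. split; first lia.
  rewrite Z2Nat.id //; lia.
Qed.

Lemma NC1 (P : pred nat) m n a : a <= n -> (forall x, m <= x < m + a -> P x) ->
  a <= count P (seq.iota m n).
Proof.
  move=> Han H. rewrite -(subnKC Han) iotaD count_cat.
  have -> : count P (seq.iota m a) = a.
  { rewrite (eq_in_count (a2:=predT)); first by rewrite count_predT size_iota.
    move=> x. rewrite mem_iota => Hx. exact: H. }
  exact: leq_addr.
Qed.

Lemma count_mem_le (t s : seq nat) : uniq s -> count (mem t) s <= size t.
Proof.
  move=> Us. rewrite -size_filter. apply: uniq_leq_size; first exact: filter_uniq.
  move=> x. by rewrite mem_filter => /andP [].
Qed.

Lemma cnt_img (g : nat -> nat) x0 B :
  count (mem (map g (seq.iota x0 B))) (seq.iota 1 B) <= count (fun x => g x <= B) (seq.iota x0 B).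
Proof.
  rewrite -size_filter -(size_filter (fun x => g x <= B)).
  apply: (leq_trans (n := size (map g [seq x <- seq.iota x0 B | g x <= B]))); last by rewrite size_map.
  apply: uniq_leq_size; first by apply: filter_uniq; exact: iota_uniq.
  move=> y. rewrite mem_filter => /andP [/mapP [x Hx ->] Hy].
  apply/mapP. exists x => //. rewrite mem_filter Hx andbT. move: Hy. rewrite mem_iota. lia.
Qed.

Lemma cnt_lower (g : nat -> nat) (Q : pred nat) x0 B :
  {in seq.iota x0 B &, injective g} ->
  (forall x, x0 <= x -> g x <= B -> 1 <= g x /\ Q (g x)) ->
  count (fun x => g x <= B) (seq.iota x0 B) <= count Q (seq.iota 1 B).
Proof.
  move=> Hinj HQ. rewrite -size_filter -(size_filter Q).
  rewrite -(size_map g). apply: uniq_leq_size.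
  - rewrite map_inj_in_uniq; first by apply: filter_uniq; exact: iota_uniq.
    move=> x y. rewrite !mem_filter => /andP [_ Hx] /andP [_ Hy]. exact: Hinj.
  - move=> y /mapP [x Hx ->]. move: Hx. rewrite mem_filter mem_iota => /andP [Hg /andP [Hx0 _]].
    have [H1 H2] := HQ x Hx0 Hg. rewrite mem_filter H2 mem_iota /=. lia.
Qed.

Lemma Zpow_expn b k : Z.of_nat (expn b k) = (Z.of_nat b ^ Z.of_nat k)%Z.
Proof.
  elim: k => [|k IH]; first by rewrite expn0.
  rewrite expnS Nat2Z.inj_succ Z.pow_succ_r; last by lia. rewrite -IH. lia.
Qed.

Definition gneg (x : nat) : nat := x * x * x + 3 * x.
Definition gpos (x : nat) : nat := x * x - 2.
Definition Xb (e B : nat) : nat := count (fun x => expn x e <= B) (seq.iota 1 B).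
Definition KB (B : nat) : nat := count (fun k => expn 2 k <= B) (seq.iota 1 B).
Definition hneg (x j : nat) : nat := Z.to_nat (Lq (-1) (Z.of_nat x) (S (2*j))).
Definition hpos (x j : nat) : nat := Z.to_nat (Lq 1 (Z.of_nat x + 1) j).

Lemma in_Xb e B x : 0 < e -> 1 <= x -> expn x e <= B -> x \in seq.iota 1 (Xb e B).
Proof.
  move=> He Hx HxB. rewrite mem_iota.
  have : x <= Xb e B.
  { apply: NC1.
    - have : x <= expn x e by rewrite -{1}(expn1 x); apply: leq_pexp2l; lia.
      lia.
    - move=> y Hy. apply: leq_trans HxB. rewrite leq_exp2r //. lia. }
  lia.
Qed.

Lemma in_KB B j : 1 <= j -> expn 2 j <= B -> j \in seq.iota 1 (KB B).
Proof.
  move=> Hj HjB. rewrite mem_iota.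
  have : j <= KB B.
  { apply: NC1.
    - have := ltn_expl j (isT : 1 < 2). lia.
    - move=> y Hy. apply: leq_trans HjB. rewrite leq_exp2l //. lia. }
  lia.
Qed.

Lemma sub_in_count (a1 a2 : pred nat) s : {in s, forall x, a1 x -> a2 x} -> count a1 s <= count a2 s.
Proof.
  elim: s => [|y s IH] //= H.
  have H1 : a1 y -> a2 y by apply: H; rewrite in_cons eqxx.
  have H2 : count a1 s <= count a2 s by apply: IH => x Hx; apply: H; rewrite in_cons Hx orbT.
  case: (a1 y) H1; case: (a2 y) => //= H1; try lia.
Qed.

Lemma count_U_le (a b : pred nat) s : count (predU a b) s <= count a s + count b s.
Proof. have := count_predUI a b s. lia. Qed.

Lemma neg_upper B :
  count (fun u => has (fun t => (t < u) && (fcl s_neg t == fcl s_neg u)) (Iset s_neg B)) (Iset s_neg B)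
  <= count (fun x => gneg x <= B) (seq.iota 1 B) + Xb 5 B * KB B.
Proof.
  set V := (fun u => _).
  rewrite /Iset count_filter.
  set RL := [seq hneg x j | x <- seq.iota 1 (Xb 5 B), j <- seq.iota 1 (KB B)].
  apply: (leq_trans (n := count (predU (mem (map gneg (seq.iota 1 B))) (mem RL)) (seq.iota 1 B))).
  - apply: sub_in_count => u Hu /andP [HV _].
    have HuB : 1 <= u <= B by move: Hu; rewrite mem_iota; lia.
    have [a [j [Ha [Hj E]]]] := Vneg_struct HV.
    have Ha' : (1 <= Z.of_nat a)%Z by lia.
    apply/orP. case: (ltngtP j 1) => Hj1; first lia.
    + right. apply/allpairsP. exists (a, j) => /=. split.
      * apply: in_Xb => //.
        have H5 := Lm_pow _ Ha' 4.
        have H6 := Lm_mono' _ 4 (2*j) Ha' ltac:(lia).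
        have := Zpow_expn a 5. lia.
      * apply: in_KB; first lia.
        have H5 : (2 ^ Z.of_nat j <= Lq (-1) (Z.of_nat a) (S (2*j)))%Z := Lm_two _ Ha' j.
        have := Zpow_expn 2 j. rewrite /=. lia.
      * by rewrite /hneg -E Nat2Z.id.
    + left. subst j. have E3 : Z.of_nat u = Lq (-1) (Z.of_nat a) 3 := E.
      rewrite Lm_3 in E3. apply/mapP. exists a.
      * rewrite mem_iota. nia.
      * rewrite /gneg. nia.
  - apply: leq_trans (count_U_le _ _ _) _. apply: leq_add; first exact: cnt_img.
    apply: leq_trans (count_mem_le _ (iota_uniq _ _)) _.
    by rewrite size_allpairs !size_iota.
Qed.

Lemma gneg_lt x y : x < y -> gneg x < gneg y.
Proof.
  move=> H. rewrite /gneg. have H1 : x * x < y * y by apply: ltn_mul.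
  have H2 : x * x * x < y * y * y by apply: ltn_mul. lia.
Qed.

Lemma neg_lower B :
  count (fun x => gneg x <= B) (seq.iota 1 B) <=
  count (fun u => has (fun t => (t < u) && (fcl s_neg t == fcl s_neg u)) (Iset s_neg B)) (Iset s_neg B).
Proof.
  set V := (fun u => _).
  rewrite /Iset count_filter. apply: cnt_lower.
  - move=> x y _ _ E. case: (ltngtP x y) => // H.
    + have := gneg_lt H. lia.
    + have := gneg_lt H. lia.
  - move=> x Hx HxB.
    have Hxg : x < gneg x by rewrite /gneg; nia.
    split; first lia. apply/andP. split; last exact: disc_neg_pos.
    apply/hasP. exists x.
    + rewrite mem_filter disc_neg_pos mem_iota /=. lia.
    + apply/andP. split => //. rewrite /fcl !disc_neg /=.
      have -> : gneg x * gneg x + 4 = (x * x + 4) * ((x * x + 1) * (x * x + 1)) by rewrite /gneg; nia.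
      rewrite sp_mul //; lia.
Qed.

Lemma pos_lower B :
  count (fun x => gpos x <= B) (seq.iota 3 B) <=
  count (fun u => has (fun t => (t < u) && (fcl s_pos t == fcl s_pos u)) (Iset s_pos B)) (Iset s_pos B).
Proof.
  set V := (fun u => _).
  rewrite /Iset count_filter. apply: cnt_lower.
  - move=> x y Hx Hy E. move: Hx Hy. rewrite !mem_iota => Hx Hy.
    case: (ltngtP x y) => // H.
    + have : x * x < y * y by apply: ltn_mul. move: E. rewrite /gpos. lia.
    + have : y * y < x * x by apply: ltn_mul. move: E. rewrite /gpos. lia.
  - move=> x Hx HxB.
    have Hxx : 9 <= x * x by have := leq_mul Hx Hx.
    have Hxg : x < gpos x by rewrite /gpos; nia.
    split; first lia. apply/andP. split; last by rewrite disc_pos_iff /gpos; lia.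
    apply/hasP. exists x.
    + rewrite mem_filter disc_pos_iff mem_iota Hx /=. lia.
    + apply/andP. split => //. rewrite /fcl !disc_pos_eq /=; try (rewrite /gpos; lia).
      have -> : gpos x * gpos x - 4 = (x * x - 4) * (x * x).
      { rewrite /gpos. set y := x * x in Hxx *.
        have -> : y = (y - 4) + 4 by lia. set z := y - 4. 
        have -> : z + 4 - 2 = z + 2 by lia. have -> : z + 4 - 4 = z by lia. nia. }
      rewrite sp_mul //; nia.
Qed.

Lemma pos_upper B :
  count (fun u => has (fun t => (t < u) && (fcl s_pos t == fcl s_pos u)) (Iset s_pos B)) (Iset s_pos B)
  <= count (fun x => gpos x <= B) (seq.iota 3 B) + Xb 3 B * KB B.
Proof.
  set V := (fun u => _).
  rewrite [Iset s_pos B]/Iset count_filter.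
  set RL := [seq hpos x j | x <- seq.iota 1 (Xb 3 B), j <- seq.iota 1 (KB B)].
  apply: (leq_trans (n := count (predU (mem (map gpos (seq.iota 3 B))) (mem RL)) (seq.iota 1 B))).
  - apply: sub_in_count => u Hu /andP [HV HP].
    have HuB : 1 <= u <= B by move: Hu; rewrite mem_iota; lia.
    have HuI : u \in Iset s_pos B by rewrite /Iset mem_filter HP Hu.
    have [a [k [Ha [Hk E]]]] := Vpos_struct HV HuI.
    have Ha' : (3 <= Z.of_nat a)%Z by lia.
    apply/orP. case: (ltngtP k 1) => Hk1; first lia.
    + right. apply/allpairsP. exists (a - 1, S k) => /=. split.
      * apply: in_Xb => //; first lia.
        have H5 := Lp_pow _ Ha' k.
        have H6 : ((Z.of_nat a - 1) ^ 3 <= (Z.of_nat a - 1) ^ Z.of_nat (S k))%Z.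
        { apply: Z.pow_le_mono_r; lia. }
        have := Zpow_expn (a - 1) 3. rewrite (_ : Z.of_nat (a - 1) = (Z.of_nat a - 1)%Z); last by lia.
        rewrite /=. lia.
      * apply: in_KB; first lia.
        have H5 := Lp_two _ Ha' k.
        have := Zpow_expn 2 (S k). rewrite /=. lia.
      * rewrite /hpos (_ : (Z.of_nat (a - 1) + 1)%Z = Z.of_nat a); last by lia.
        by rewrite -E Nat2Z.id.
    + left. subst k. have E3 : Z.of_nat u = Lq 1 (Z.of_nat a) 2 := E.
      rewrite Lp_2 in E3. apply/mapP. exists a.
      * rewrite mem_iota. nia.
      * rewrite /gpos. nia.
  - apply: leq_trans (count_U_le _ _ _) _. apply: leq_add; first exact: cnt_img.
    apply: leq_trans (count_mem_le _ (iota_uniq _ _)) _.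
    by rewrite size_allpairs !size_iota.
Qed.

Open Scope R_scope.

Lemma INR_expn x e : INR (expn x e) = INR x ^ e.
Proof.
  elim: e => [|e IH]; first by rewrite expn0.
  rewrite expnS mult_INR IH. simpl. ring.
Qed.

Lemma Rpower_pos x y : 0 < Rpower x y.
Proof. rewrite /Rpower. exact: exp_pos. Qed.

Lemma root_le (e x B : nat) r : (0 < e)%nat -> r * INR e = 1 -> (expn x e <= B)%nat ->
  INR x <= Rpower (INR B) r.
Proof.
  move=> He Hr HxB.
  case: x HxB => [|x] HxB; first by rewrite /=; apply: Rlt_le; exact: Rpower_pos.
  have Hx : 0 < INR x.+1 by apply: lt_0_INR; lia.
  rewrite -{1}(Rpower_1 _ Hx) -Hr Rmult_comm -Rpower_mult (Rpower_pow _ _ Hx).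
  apply: Rle_Rpower_l.
  -
    have He' : 0 < INR e by apply: lt_0_INR; lia.
    have : r = / INR e by field_simplify_eq; [lra| lra].
    move=> ->. left. exact: Rinv_0_lt_compat.
  - split; first exact: pow_lt. rewrite -INR_expn. apply: le_INR. by apply/ssrnat.leP.
Qed.

Lemma floorR y : 0 <= y -> exists q : nat, INR q <= y < INR q + 1.
Proof.
  move=> Hy. have [H1 H2] := archimed y.
  have Hz : (0 < up y)%Z by apply: lt_IZR; lra.
  exists (Z.to_nat (up y - 1)).
  rewrite INR_IZR_INZ Z2Nat.id; last by lia.
  rewrite minus_IZR. lra.
Qed.

Lemma RC1 (P : pred nat) m n y : (1 <= m)%nat -> 0 <= y ->
  (forall x, (m <= x)%nat -> P x -> INR (x - m + 1) <= y) ->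
  INR (count P (seq.iota m n)) <= y.
Proof.
  move=> Hm Hy H. elim: n => [|n IH]; first by rewrite /=.
  have := iotaD m n 1. rewrite addn1 => ->. rewrite count_cat /=.
  case HP: (P (m + n)%nat).
  - have Hc : (count P (seq.iota m n) <= n)%nat.
    { apply: leq_trans (count_size _ _) _. by rewrite size_iota. }
    apply: Rle_trans (H (m + n)%nat ltac:(lia) HP). apply: le_INR. apply/ssrnat.leP. lia.
  - have -> : (count P (seq.iota m n) + (false + 0) = count P (seq.iota m n))%nat by lia.
    exact: IH.
Qed.

Lemma Rpower_root_pow (e B : nat) r : r * INR e = 1 -> (0 < B)%nat ->
  Rpower (INR B) r ^ e = INR B.
Proof.
  move=> Hr HB. have HB' : 0 < INR B by apply: lt_0_INR; lia.
  rewrite -(Rpower_pow _ _ (Rpower_pos _ _)) Rpower_mult Hr. exact: Rpower_1.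
Qed.

Lemma floor_root (e B : nat) r : (0 < e)%nat -> r * INR e = 1 -> (0 < B)%nat ->
  exists q : nat, (expn q e <= B)%nat /\ Rpower (INR B) r < INR q + 1.
Proof.
  move=> He Hr HB.
  have [q [Hq1 Hq2]] := floorR (Rlt_le _ _ (Rpower_pos (INR B) r)).
  exists q. split => //. apply/ssrnat.leP. apply: INR_le. rewrite INR_expn.
  rewrite -(Rpower_root_pow Hr HB). apply: pow_incr. split => //. exact: pos_INR.
Qed.

Lemma INR_sub1 q : INR q - 1 <= INR (q - 1).
Proof.
  case: q => [|q]; first by rewrite /=; lra.
  rewrite S_INR (_ : (q.+1 - 1 = q)%nat); [lra|lia].
Qed.

Lemma expn3 x : expn x 3 = (x * x * x)%nat.
Proof. rewrite !expnS expn0. lia. Qed.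
Lemma expn2' x : expn x 2 = (x * x)%nat.
Proof. rewrite !expnS expn0. lia. Qed.

Lemma third : 1/3 * INR 3 = 1. Proof. simpl. field. Qed.
Lemma half : 1/2 * INR 2 = 1. Proof. simpl. field. Qed.
Lemma fifth : 1/5 * INR 5 = 1. Proof. simpl. field. Qed.

Lemma cUneg_upper B : INR (count (fun x => gneg x <= B)%nat (seq.iota 1 B)) <= Rpower (INR B) (1/3).
Proof.
  apply: RC1 => //; first by left; exact: Rpower_pos.
  move=> x Hx HxB. rewrite (_ : (x - 1 + 1 = x)%nat); last by lia.
  apply: (root_le (e:=3)) => //; first exact: third.
  rewrite expn3. move: HxB. rewrite /gneg. lia.
Qed.

Lemma cUneg_lower B : (0 < B)%nat ->
  Rpower (INR B) (1/3) - 2 <= INR (count (fun x => gneg x <= B)%nat (seq.iota 1 B)).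
Proof.
  move=> HB. have [q [Hq Hy]] := floor_root (e:=3) isT third HB.
  rewrite expn3 in Hq.
  have Hc : (q - 1 <= count (fun x => gneg x <= B)%nat (seq.iota 1 B))%nat.
  { apply: NC1.
    - case: (posnP q) => Hq0; first lia. have : (q <= q * q * q)%nat by nia. have : (q <= q * q)%nat by nia. lia.
    - move=> x Hx. rewrite /gneg.
      have H1 : (x.+1 * x.+1 <= q * q)%nat by apply: leq_mul; lia.
      have H2 : (x.+1 * x.+1 * x.+1 <= q * q * q)%nat by apply: leq_mul; lia.
      nia. }
  have := INR_sub1 q. have := le_INR _ _ (elimT ssrnat.leP Hc). lra.
Qed.

Lemma Xb_upper e B r : (0 < e)%nat -> r * INR e = 1 -> INR (Xb e B) <= Rpower (INR B) r.
Proof.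
  move=> He Hr. apply: RC1 => //; first by left; exact: Rpower_pos.
  move=> x Hx HxB. rewrite (_ : (x - 1 + 1 = x)%nat); last by lia.
  exact: root_le He Hr HxB.
Qed.

Lemma KB_upper B : INR (KB B) <= 60 * Rpower (INR B) (1/30).
Proof.
  apply: RC1 => //; first by left; apply: Rmult_lt_0_compat; [lra|exact: Rpower_pos].
  move=> k Hk HkB. rewrite (_ : (k - 1 + 1 = k)%nat); last by lia.
  have HB : INR (expn 2 k) <= INR B by apply: le_INR; apply/ssrnat.leP.
  rewrite INR_expn (_ : INR 2 = 2) in HB; last by simpl; lra.
  have H2k : 0 < 2 ^ k by apply: pow_lt; lra.
  have Hln := ln_le _ _ H2k HB.
  rewrite ln_pow in Hln; last by lra.
  have Hl2 := ln_lt_2.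
  have Hk0 : 0 <= INR k by exact: pos_INR.
  have Hexp := exp_ineq1_le (1/30 * ln (INR B)).
  rewrite /Rpower.
  have : INR k * ln 2 >= INR k * / 2.
  { apply: Rle_ge. apply: Rmult_le_compat_l; [exact: Hk0|lra]. }
  lra.
Qed.

Lemma cUpos_upper B : INR (count (fun x => gpos x <= B)%nat (seq.iota 3 B)) <= Rpower (INR B) (1/2).
Proof.
  apply: RC1 => //; first by left; exact: Rpower_pos.
  move=> x Hx HxB. rewrite (_ : (x - 3 + 1 = x - 2)%nat); last by lia.
  apply: (root_le (e:=2)) => //; first exact: half.
  rewrite expn2'. move: HxB. rewrite /gpos.
  have -> : x = ((x - 3) + 3)%nat by lia. set z := (x - 3)%nat.
  rewrite (_ : (z + 3 - 2 = z + 1)%nat); last by lia. nia.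
Qed.

Lemma INR_sub2 q : INR q - 2 <= INR (q - 2).
Proof.
  have := INR_sub1 q. have := INR_sub1 (q - 1). rewrite (_ : (q - 1 - 1 = q - 2)%nat); last by lia.
  lra.
Qed.

Lemma cUpos_lower B : (0 < B)%nat ->
  Rpower (INR B) (1/2) - 3 <= INR (count (fun x => gpos x <= B)%nat (seq.iota 3 B)).
Proof.
  move=> HB. have [q [Hq Hy]] := floor_root (e:=2) isT half HB.
  rewrite expn2' in Hq.
  have Hc : (q - 2 <= count (fun x => gpos x <= B)%nat (seq.iota 3 B))%nat.
  { apply: NC1.
    - case: (posnP q) => Hq0; first lia. have : (q <= q * q)%nat by nia. lia.
    - move=> x Hx. rewrite /gpos.
      have H1 : (x * x <= q * q)%nat by apply: leq_mul; lia.
      lia. }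
  have := INR_sub2 q. have := le_INR _ _ (elimT ssrnat.leP Hc). lra.
Qed.

Lemma lim_negpow c : 0 < c -> is_lim_seq (fun n => Rpower (INR n) (- c)) 0.
Proof.
  move=> Hc.
  have Hinf : is_lim_seq (fun n => Rpower (INR n) c) p_infty.
  { apply/is_lim_seq_spec => M.
    have := proj2 (is_lim_seq_spec INR p_infty) is_lim_seq_INR (Rpower (Rmax 1 M) (/ c)).
    apply: filter_imp => n Hn.
    have HT := Rpower_pos (Rmax 1 M) (/ c).
    have Hm : 0 < Rmax 1 M by apply: Rlt_le_trans (Rmax_l 1 M); lra.
    apply: Rle_lt_trans (Rmax_r 1 M) _.
    have E : Rpower (Rpower (Rmax 1 M) (/ c)) c = Rmax 1 M.
    { rewrite Rpower_mult Rinv_l; last by lra. exact: Rpower_1. }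
    rewrite -E. apply: Rlt_Rpower_l => //. }
  have := is_lim_seq_inv _ _ Hinf ltac:(discriminate).
  apply: is_lim_seq_ext => n. by rewrite Rpower_Ropp.
Qed.

Lemma lim_one_minus a c : 0 < c -> is_lim_seq (fun n => 1 - a * Rpower (INR n) (- c)) 1.
Proof.
  move=> Hc. have H := is_lim_seq_scal_l _ a _ (lim_negpow Hc).
  have := is_lim_seq_minus' _ _ 1 (a * 0) (is_lim_seq_const 1) H.
  by rewrite Rmult_0_r Rminus_0_r.
Qed.

Lemma lim_one_plus a c : 0 < c -> is_lim_seq (fun n => 1 + a * Rpower (INR n) (- c)) 1.
Proof.
  move=> Hc. have H := is_lim_seq_scal_l _ a _ (lim_negpow Hc).
  have := is_lim_seq_plus' _ _ 1 (a * 0) (is_lim_seq_const 1) H.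
  by rewrite Rmult_0_r Rplus_0_r.
Qed.

Lemma squeeze_gen (D : nat -> R) (r c1 c2 a1 a2 : R) (E : nat -> R) :
  0 < c1 -> 0 < c2 ->
  (forall B, (0 < B)%nat -> Rpower (INR B) r - a1 <= D B <= Rpower (INR B) r + a2 * E B) ->
  (forall B, (0 < B)%nat -> E B * / Rpower (INR B) r = Rpower (INR B) (- c2)) ->
  (forall B, (0 < B)%nat -> / Rpower (INR B) r = Rpower (INR B) (- c1)) ->
  is_lim_seq (fun B => D B / Rpower (INR B) r) 1.
Proof.
  move=> Hc1 Hc2 HD HE Hy.
  apply: (is_lim_seq_le_le_loc (fun n => 1 - a1 * Rpower (INR n) (- c1))
                               _ (fun n => 1 + a2 * Rpower (INR n) (- c2))).
  - exists 1%nat => B HB. have HB' : (0 < B)%nat by apply/ssrnat.leP; lia.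
    have [H1 H2] := HD B HB'. have Hp := Rpower_pos (INR B) r.
    rewrite -(HE B HB') -(Hy B HB'). rewrite /Rdiv.
    have Hi : 0 < / Rpower (INR B) r by apply: Rinv_0_lt_compat.
    split.
    + have -> : 1 - a1 * / Rpower (INR B) r = (Rpower (INR B) r - a1) * / Rpower (INR B) r by field; lra.
      apply: Rmult_le_compat_r; lra.
    + have -> : 1 + a2 * (E B * / Rpower (INR B) r) = (Rpower (INR B) r + a2 * E B) * / Rpower (INR B) r by field; lra.
      apply: Rmult_le_compat_r; lra.
  - exact: lim_one_minus.
  - exact: lim_one_plus.
Qed.

Lemma delta_INR s B : INR (card_I s B) - INR (card_N s B) =
  INR (count (fun u => has (fun t => (t < u) && (fcl s t == fcl s u))%nat (Iset s B)) (Iset s B)).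
Proof. rewrite -(delta_count s B) plus_INR. ring. Qed.


Theorem theorem4p5 :
  is_lim_seq (fun B : nat =>
      (INR (card_I s_neg B) - INR (card_N s_neg B)) / Rpower (INR B) (1/3))
    1 /\
  is_lim_seq (fun B : nat =>
      (INR (card_I s_pos B) - INR (card_N s_pos B)) / Rpower (INR B) (1/2))
    1.
Proof.
  split.
  - apply: (squeeze_gen (c1 := 1/3) (c2 := 1/10) (a1 := 2) (a2 := 60)
              (E := fun B => Rpower (INR B) (1/5) * Rpower (INR B) (1/30))); try lra.
    + move=> B HB. rewrite delta_INR. split.
      * apply: Rle_trans (cUneg_lower HB) _. apply: le_INR. apply/ssrnat.leP. exact: neg_lower.
      * apply: Rle_trans (le_INR _ _ (elimT ssrnat.leP (neg_upper B))) _.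
        rewrite plus_INR mult_INR.
        have H1 := cUneg_upper B. have H2 := @Xb_upper 5 B (1/5) isT fifth. have H3 := KB_upper B.
        have H4 := pos_INR (Xb 5 B). have H5 := pos_INR (KB B).
        have : INR (Xb 5 B) * INR (KB B) <= Rpower (INR B) (1/5) * (60 * Rpower (INR B) (1/30)).
        { apply: Rmult_le_compat => //. }
        lra.
    + move=> B HB. rewrite -Rpower_Ropp -!Rpower_plus. f_equal. field.
    + move=> B HB. by rewrite -Rpower_Ropp.
  - apply: (squeeze_gen (c1 := 1/2) (c2 := 2/15) (a1 := 3) (a2 := 60)
              (E := fun B => Rpower (INR B) (1/3) * Rpower (INR B) (1/30))); try lra.
    + move=> B HB. rewrite delta_INR. split.
      * apply: Rle_trans (cUpos_lower HB) _. apply: le_INR. apply/ssrnat.leP. exact: pos_lower.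
      * apply: Rle_trans (le_INR _ _ (elimT ssrnat.leP (pos_upper B))) _.
        rewrite plus_INR mult_INR.
        have H1 := cUpos_upper B. have H2 := @Xb_upper 3 B (1/3) isT third. have H3 := KB_upper B.
        have H4 := pos_INR (Xb 3 B). have H5 := pos_INR (KB B).
        have : INR (Xb 3 B) * INR (KB B) <= Rpower (INR B) (1/3) * (60 * Rpower (INR B) (1/30)).
        { apply: Rmult_le_compat => //. }
        lra.
    + move=> B HB. rewrite -Rpower_Ropp -!Rpower_plus. f_equal. field.
    + move=> B HB. by rewrite -Rpower_Ropp.
Qed.
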